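(* For every $n\ge 0$, the number of left-walks of length $2n$ equals the number of right-walks of length $2n$.
   Context: All walks are finite sequences of unit steps from $\{N,E,S,W\}=\{(0,1),(1,0),(0,-1),(-1,0)\}$ on $\mathbb{Z}^2$, starting at $(0,0)$. A walk is \emph{eager} if it contains no two consecutive steps $E$ then $S$, and no two consecutive steps $N$ then $W$. A \emph{QP-subloop} of a walk is a contiguous subsequence of steps starting and ending at the same point $(p,q)$ and visiting only points $(x,y)$ with $x\ge p$, $y\ge q$. A walk is \emph{standard} if every QP-subloop (of positive length) begins with an $N$ step. A \emph{big-walk} is a standard eager walk staying in the half-plane $\{x+y\ge 0\}$ and ending at some point $(x,-x)$. A \emph{left-walk} is a big-walk ending at a point $(x,-x)$ with $x\le 0$; a \emph{right-walk} is a big-walk ending at a point $(x,-x)$ with $x\ge 0$. *)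

(* Defs.v *)
From HB Require Import structures.
From mathcomp Require Import all_boot all_order all_algebra.
Set Implicit Arguments. Unset Strict Implicit. Unset Printing Implicit Defensive.
Import Order.TTheory GRing.Theory Num.Theory.

Inductive step := N | E | S | W.

Definition step_code (s : step) : bool * bool :=
  match s with N => (false, false) | E => (false, true)
             | S => (true, false) | W => (true, true) end.
Definition step_decode (c : bool * bool) : step :=
  match c with (false, false) => N | (false, true) => E
             | (true, false) => S | (true, true) => W end.
Lemma step_codeK : cancel step_code step_decode. Proof. by case. Qed.
HB.instance Definition _ := Finite.copy step (can_type step_codeK).

Local Open Scope ring_scope.

Definition step_vec (s : step) : int * int :=
  match s with N => (0, 1) | E => (1, 0) | S => (0, -1) | W => (-1, 0) end.

Definition endpoint (w : seq step) : int * int :=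
  foldl (fun p s => (p.1 + (step_vec s).1, p.2 + (step_vec s).2)) (0, 0) w.

Definition point (w : seq step) (k : nat) : int * int := endpoint (take k w).

Local Close Scope ring_scope.

Definition eager (w : seq step) : bool :=
  all (fun k => ~~ ((nth N w k == E) && (nth N w k.+1 == S))
              && ~~ ((nth N w k == N) && (nth N w k.+1 == W)))
      (iota 0 (size w).-1).

(* the steps i+1..j (0-indexed steps i..j-1) form a QP-subloop, i < j *)
Definition qp_subloop (w : seq step) (i j : nat) : bool :=
  [&& i < j, j <= size w, point w i == point w j &
     all (fun k => ((point w i).1 <= (point w k).1)%R
                   && ((point w i).2 <= (point w k).2)%R) (iota i (j - i).+1)].

Definition standard (w : seq step) : bool :=
  all (fun i => all (fun j => qp_subloop w i j ==> (nth N w i == N))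
                    (iota 0 (size w).+1))
      (iota 0 (size w).+1).

Definition in_half_plane (w : seq step) : bool :=
  all (fun k => (0 <= (point w k).1 + (point w k).2)%R) (iota 0 (size w).+1).

Definition big_walk (w : seq step) : bool :=
  [&& standard w, eager w, in_half_plane w &
      ((endpoint w).1 + (endpoint w).2 == 0)%R].

Definition left_walk (w : seq step) : bool :=
  big_walk w && ((endpoint w).1 <= 0)%R.

Definition right_walk (w : seq step) : bool :=
  big_walk w && (0 <= (endpoint w).1)%R.

(* Main.v *)
Require Import Defs.
From HB Require Import structures.
From mathcomp Require Import all_boot all_order all_algebra.
From mathcomp Require Import zify.
From Stdlib Require Import Classical.
Set Implicit Arguments. Unset Strict Implicit. Unset Printing Implicit Defensive.
Import Order.TTheory GRing.Theory Num.Theory.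

Definition swp (s : step) : step :=
  match s with N => E | E => N | S => W | W => S end.
Lemma swpK : involutive swp. Proof. by case. Qed.

Definition le2 (p q : int * int) := ((p.1 <= q.1)%R && (p.2 <= q.2)%R).

Lemma pair_eq (p q : int * int) : p.1 = q.1 -> p.2 = q.2 -> p = q.
Proof. by move: p q => [a b] [c d] /= -> ->. Qed.

Lemma point0 w : point w 0 = (0%R, 0%R). Proof. by rewrite /point take0. Qed.

Lemma pointS w k : k < size w -> point w k.+1 =
  ((point w k).1 + (step_vec (nth N w k)).1, (point w k).2 + (step_vec (nth N w k)).2)%R.
Proof. by move=> hk; rewrite /point (take_nth N hk) /endpoint foldl_rcons. Qed.

Lemma point_size w k : size w <= k -> point w k = endpoint w.
Proof. by move=> h; rewrite /point take_oversize. Qed.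

Lemma qpP w i j : reflect [/\ i < j, j <= size w, point w i = point w j &
   forall k, i <= k <= j -> le2 (point w i) (point w k)] (qp_subloop w i j).
Proof.
rewrite /qp_subloop; apply: (iffP and4P) => [[h1 h2 /eqP h3 /allP h4]|[h1 h2 h3 h4]]; split => //.
- move=> k hk; apply: h4; rewrite mem_iota; lia.
- by apply/eqP.
- apply/allP => k; rewrite mem_iota => hk; apply: h4; lia.
Qed.

Definition inl w k := [exists i : 'I_(size w).+1, exists j : 'I_(size w).+1,
   (i <= k < j) && qp_subloop w i j].

Lemma inlP w k : reflect (exists i j, i <= k < j /\ qp_subloop w i j) (inl w k).
Proof.
apply: (iffP existsP) => [[i /existsP[j /andP[h1 h2]]]|[i [j [h1 h2]]]].
  by exists i, j.
case/qpP: (h2) => hij hj _ _.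
exists (inord i); apply/existsP; exists (inord j).
rewrite !inordK; first exact/andP. all: lia.
Qed.

Definition exj w (P : pred nat) i := [exists j : 'I_(size w).+1, P j && qp_subloop w i j].
Lemma exjP w (P : pred nat) i : reflect (exists j, P j /\ qp_subloop w i j) (exj w P i).
Proof.
apply: (iffP existsP) => [[j /andP[h1 h2]]|[j [h1 h2]]]; first by exists j.
case/qpP: (h2) => hij hj _ _.
exists (inord j); rewrite inordK; first exact/andP. lia.
Qed.
Definition exi w (P : pred nat) j := [exists i : 'I_(size w).+1, P i && qp_subloop w i j].
Lemma exiP w (P : pred nat) j : reflect (exists i, P i /\ qp_subloop w i j) (exi w P j).
Proof.
apply: (iffP existsP) => [[i /andP[h1 h2]]|[i [h1 h2]]]; first by exists i.
case/qpP: (h2) => hij hj _ _.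
exists (inord i); rewrite inordK; first exact/andP. lia.
Qed.

Definition phi w := mkseq (fun k => if inl w k then nth N w k else swp (nth N w k)) (size w).
Lemma size_phi w : size (phi w) = size w. Proof. by rewrite size_mkseq. Qed.
Lemma nth_phi w k : k < size w ->
  nth N (phi w) k = if inl w k then nth N w k else swp (nth N w k).
Proof. by move=> hk; rewrite nth_mkseq. Qed.

Lemma sv1 s : (step_vec (swp s)).1 = (step_vec s).2. Proof. by case: s. Qed.
Lemma sv2 s : (step_vec (swp s)).2 = (step_vec s).1. Proof. by case: s. Qed.

Lemma transl w i m : i <= m -> m <= size w -> (forall s, i <= s < m -> inl w s) ->
  ((point (phi w) m).1 - (point (phi w) i).1 = (point w m).1 - (point w i).1)%R /\
  ((point (phi w) m).2 - (point (phi w) i).2 = (point w m).2 - (point w i).2)%R.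
Proof.
elim: m => [|m IH] him hm hs.
  have -> : i = 0 by lia.
  by rewrite !subrr.
case: (eqVneq i m.+1) => [->|hne]; first by rewrite !subrr.
have [h1 h2] := IH ltac:(lia) ltac:(lia) (fun s hs' => hs s ltac:(lia)).
have hm' : m < size w by lia.
rewrite (pointS hm') pointS ?size_phi // nth_phi // (hs m ltac:(lia)) /=.
lia.
Qed.

Lemma merge w a b c d : a <= c <= b -> b <= d ->
  qp_subloop w a b -> qp_subloop w c d -> qp_subloop w a d.
Proof.
move=> hc hbd /qpP[hab hb eab lab] /qpP[hcd hd ecd lcd].
have := lab c hc; have := lcd b ltac:(lia); rewrite /le2 -eab => /andP[u1 u2] /andP[v1 v2].
have eac : point w a = point w c by apply: pair_eq; lia.
apply/qpP; split => //; first lia.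
  by rewrite eac.
move=> k hk; case: (leqP k b) => hkb; first by apply: lab; lia.
rewrite eac; apply: lcd; lia.
Qed.

Definition outerpos w a := forall i j, qp_subloop w i j -> ~~ (i < a < j).

Lemma loop_inl w i j s : qp_subloop w i j -> i <= s < j -> inl w s.
Proof. by move=> hl hs; apply/inlP; exists i, j. Qed.

Lemma notinl_outer w k : ~~ inl w k -> outerpos w k.
Proof.
move=> hn i j hl; apply/negP => /andP[h1 h2]; move/negP: hn; apply.
apply: (loop_inl hl); lia.
Qed.

Lemma outer_pt w a : a <= size w -> outerpos w a ->
  (point (phi w) a).1 = (point w a).2 /\ (point (phi w) a).2 = (point w a).1.
Proof.
elim/ltn_ind: a => a IH ha hout.
case: a IH ha hout => [|k] IH ha hout; first by rewrite !point0.
have hk : k < size w by lia.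
case hin: (inl w k).
- case/inlP: hin => i [j [hij hl]].
  have hj : j = k.+1.
    have := hout i j hl; case/qpP: hl => _ hj _ _; lia.
  subst j.
  have ex : exists i, qp_subloop w i k.+1 by exists i.
  case: (ex_minnP ex) => i0 hl0 hmin.
  case/qpP: (hl0) => hi0 _ e0 _.
  have hi0out : outerpos w i0.
    move=> a b hab; apply/negP => /andP[h1 h2].
    have hb : b <= k.+1 by have := hout a b hab; lia.
    have := hmin a (merge (a:=a) (b:=b) (c:=i0) (d:=k.+1) ltac:(lia) hb hab hl0); lia.
  have [e1 e2] := IH i0 hi0 ltac:(lia) hi0out.
  have [t1 t2] := transl (w:=w) (i:=i0) (m:=k.+1) ltac:(lia) ha
     (fun s hs => loop_inl hl0 hs).
  rewrite -e0 in t1 t2 *; lia.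
- have ho := notinl_outer (negbT hin).
  have [e1 e2] := IH k (ltnSn k) ltac:(lia) ho.
  rewrite (pointS hk) pointS ?size_phi // nth_phi // hin /= sv1 sv2; lia.
Qed.

Lemma repr_pt w m : m <= size w -> exists a, [/\ a <= m, outerpos w a,
   (a = m \/ exists j, a < m < j /\ qp_subloop w a j) &
   ((point (phi w) m).1 = (point w a).2 + ((point w m).1 - (point w a).1) /\
    (point (phi w) m).2 = (point w a).1 + ((point w m).2 - (point w a).2))%R].
Proof.
move=> hm.
case: (classic (outerpos w m)) => ho.
  exists m; split => //; first by left.
  have [e1 e2] := outer_pt hm ho; rewrite e1 e2 !subrr !addr0; done.
have ex : exists a, exj w (fun j => a < m < j) a.
  apply: NNPP => hne; apply: ho => i j hl; apply/negP => hij; apply: hne.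
  by exists i; apply/exjP; exists j.
case: (ex_minnP ex) => a /exjP[j [haj hl]] hmin.
move: haj => /= /andP[ha1 ha2].
have haout : outerpos w a.
  move=> c d hcd; apply/negP => /andP[h1 h2].
  case: (ltnP m d) => hmd.
    have := hmin c ltac:(apply/exjP; exists d; split => //; apply/andP; lia); lia.
  have hl2 := merge (a:=c) (b:=d) (c:=a) (d:=j) ltac:(lia) ltac:(lia) hcd hl.
  have := hmin c ltac:(apply/exjP; exists j; split => //; apply/andP; lia); lia.
case/qpP: (hl) => _ hj _ _.
exists a; split; first lia; first done.
  right; exists j; split => //; lia.
have [e1 e2] := outer_pt (w:=w) (a:=a) ltac:(lia) haout.
have hs : forall s, a <= s < m -> inl w s.
  move=> s hs; apply: (loop_inl hl); lia.
have [t1 t2] := transl (w:=w) (i:=a) (m:=m) ltac:(lia) hm hs.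
lia.
Qed.

Lemma loop_phi_of w i j : qp_subloop w i j -> qp_subloop (phi w) i j.
Proof.
move=> hl; case/qpP: (hl) => hij hj e l.
have hs : forall k, i <= k <= j -> forall s, i <= s < k -> inl w s.
  by move=> k hk s hs; apply: (loop_inl hl); lia.
apply/qpP; split => //; first by rewrite size_phi.
  have [t1 t2] := transl (w:=w) (i:=i) (m:=j) ltac:(lia) hj (hs j ltac:(lia)).
  rewrite -e in t1 t2; apply: pair_eq; lia.
move=> k hk; have [t1 t2] := transl (w:=w) (i:=i) (m:=k) ltac:(lia) ltac:(lia) (hs k hk).
have := l k hk; rewrite /le2 => /andP[u1 u2]; apply/andP; lia.
Qed.

Lemma loop_phi_to w i j : qp_subloop (phi w) i j -> qp_subloop w i j.
Proof.
move=> hl; case/qpP: (hl); rewrite size_phi => hij hj e l.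
case: (classic (forall s, i <= s < j -> inl w s)) => hA.
  have hs : forall k, i <= k <= j -> forall s, i <= s < k -> inl w s.
    by move=> k hk s hs; apply: hA; lia.
  apply/qpP; split => //.
    have [t1 t2] := transl (w:=w) (i:=i) (m:=j) ltac:(lia) hj (hs j ltac:(lia)).
    rewrite -e in t1 t2; apply: pair_eq; lia.
  move=> k hk; have [t1 t2] := transl (w:=w) (i:=i) (m:=k) ltac:(lia) ltac:(lia) (hs k hk).
  have := l k hk; rewrite /le2 => /andP[u1 u2]; apply/andP; lia.
exfalso.
have [k [hk hnk]] : exists k, i <= k < j /\ ~~ inl w k.
  apply: NNPP => hne; apply: hA => s hs; apply: NNPP => hn; apply: hne.
  by exists s; split => //; apply/negP.
have [ist [his1 his2 hisout hisp]] : exists ist, [/\ i <= ist, ist <= k, outerpos w ist &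
     point (phi w) ist = point (phi w) i].
  case: (classic (outerpos w i)) => ho; first by exists i; split => //; lia.
  have ex : exists b, exi w (fun a => a < i < b) b.
    apply: NNPP => hne; apply: ho => a b hab; apply/negP => h; apply: hne.
    by exists b; apply/exiP; exists a.
  have bnd : forall b, exi w (fun a => a < i < b) b -> b <= size w.
    by move=> b /exiP[a [_ /qpP[_ ? _ _]]].
  case: (ex_maxnP ex bnd) => b /exiP[a [/= /andP[ha1 ha2] hab]] hmax.
  have hbout : outerpos w b.
    move=> c d hcd; apply/negP => /andP[h1 h2].
    case: (ltnP c i) => hci.
      have := hmax d ltac:(apply/exiP; exists c; split => //=; apply/andP; lia); lia.
    have had := merge (a:=a) (b:=b) (c:=c) (d:=d) ltac:(lia) ltac:(lia) hab hcd.
    have := hmax d ltac:(apply/exiP; exists a; split => //=; apply/andP; lia); lia.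
  have hbk : b <= k.
    case: (leqP b k) => // hkb; move/negP: hnk; case; apply: (loop_inl hab); lia.
  case/qpP: (hab) => _ hb eab lab.
  have hs : forall s, i <= s < b -> inl w s.
    by move=> s hs; apply: (loop_inl hab); lia.
  have [t1 t2] := transl (w:=w) (i:=i) (m:=b) ltac:(lia) hb hs.
  have := lab i ltac:(lia); have := l b ltac:(lia); rewrite /le2 eab.
  move=> /andP[u1 u2] /andP[v1 v2].
  exists b; split; [lia|lia|done|apply: pair_eq; lia].
have [jst [hjs1 hjs2 hjsout hjsp]] : exists jst, [/\ k < jst, jst <= j, outerpos w jst &
     point (phi w) jst = point (phi w) j].
  case: (classic (outerpos w j)) => ho; first by exists j; split => //; lia.
  have ex : exists c, exj w (fun d => c < j < d) c.
    apply: NNPP => hne; apply: ho => c d hcd; apply/negP => h; apply: hne.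
    by exists c; apply/exjP; exists d.
  case: (ex_minnP ex) => c /exjP[d [/= /andP[hc1 hc2] hcd]] hmin.
  have hcout : outerpos w c.
    move=> e0 f hef; apply/negP => /andP[h1 h2].
    case: (ltnP j f) => hjf.
      have := hmin e0 ltac:(apply/exjP; exists f; split => //=; apply/andP; lia); lia.
    have hed := merge (a:=e0) (b:=f) (c:=c) (d:=d) ltac:(lia) ltac:(lia) hef hcd.
    have := hmin e0 ltac:(apply/exjP; exists d; split => //=; apply/andP; lia); lia.
  have hck : k < c.
    case: (ltnP k c) => // hkc; move/negP: hnk; case; apply: (loop_inl hcd); lia.
  case/qpP: (hcd) => _ hd ecd lcd.
  have hs : forall s, c <= s < j -> inl w s.
    by move=> s hs; apply: (loop_inl hcd); lia.
  have [t1 t2] := transl (w:=w) (i:=c) (m:=j) ltac:(lia) hj hs.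
  have := lcd j ltac:(lia); have := l c ltac:(lia); rewrite /le2 e.
  move=> /andP[u1 u2] /andP[v1 v2].
  exists c; split; [lia|lia|done|apply: pair_eq; lia].
have [a1 a2] := outer_pt (w:=w) (a:=ist) ltac:(lia) hisout.
have [b1 b2] := outer_pt (w:=w) (a:=jst) ltac:(lia) hjsout.
have hloop : qp_subloop w ist jst.
  apply/qpP; split; [lia | lia | |].
    apply: pair_eq.
      rewrite -a2 -b2 hisp hjsp e; done.
    rewrite -a1 -b1 hisp hjsp e; done.
  move=> m hm.
  have [a [ham haout hcase [r1 r2]]] := repr_pt (w:=w) (m:=m) ltac:(lia).
  have hisa : ist <= a.
    case: hcase => [->|[j' [hj' hl']]]; first lia.
    case: (leqP ist a) => // hai; have := hisout a j' hl'; lia.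
  have [c1 c2] := outer_pt (w:=w) (a:=a) ltac:(lia) haout.
  have := l a ltac:(lia); rewrite /le2 -hisp => /andP[v1 v2].
  have [w1 w2] : ((point w a).1 <= (point w m).1 /\ (point w a).2 <= (point w m).2)%R.
    case: hcase => [->|[j' [hj' hl']]]; first by split.
    case/qpP: hl' => _ _ _ l'; have := l' m ltac:(lia); rewrite /le2 => /andP[]; done.
  apply/andP; lia.
move/negP: hnk; case; apply: (loop_inl hloop); lia.
Qed.

Lemma loop_phi w i j : qp_subloop (phi w) i j = qp_subloop w i j.
Proof. by apply/idP/idP; [apply: loop_phi_to | apply: loop_phi_of]. Qed.

Lemma inl_phi w k : inl (phi w) k = inl w k.
Proof.
apply/inlP/inlP => [[i [j [h1 h2]]]|[i [j [h1 h2]]]]; exists i, j; split => //.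
  by rewrite -loop_phi.
by rewrite loop_phi.
Qed.

Lemma phiK w : phi (phi w) = w.
Proof.
apply: (@eq_from_nth _ N); first by rewrite !size_phi.
move=> k; rewrite !size_phi => hk.
rewrite nth_phi ?size_phi // inl_phi nth_phi //.
by case: (inl w k) => //; rewrite swpK.
Qed.

Lemma endpoint_phi w : ((endpoint (phi w)).1 = (endpoint w).2 /\ (endpoint (phi w)).2 = (endpoint w).1).
Proof.
rewrite -(point_size (w:=phi w) (k:=size w)) ?size_phi //.
rewrite -(point_size (w:=w) (k:=size w)) //.
apply: outer_pt => // i j /qpP[h1 h2 _ _]; lia.
Qed.

Lemma last_step w k : inl w k -> ~~ inl w k.+1 -> k.+1 < size w ->
  (nth N w k == S) || (nth N w k == W).
Proof.
move=> /inlP[i [j [hij hl]]] hn hk.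
have hj : j = k.+1.
  case: (leqP j k.+1) => hjk; first lia.
  by move/negP: hn; case; apply: (loop_inl hl); lia.
subst j; case/qpP: hl => _ _ e l.
have := l k ltac:(lia); rewrite /le2 e (pointS (w:=w) (k:=k)) /=; last lia.
case: (nth N w k) => /= /andP[u1 u2] //; lia.
Qed.

Lemma first_step w k : ~~ inl w k -> inl w k.+1 -> k.+1 < size w ->
  (nth N w k.+1 == N) || (nth N w k.+1 == E).
Proof.
move=> hn /inlP[i [j [hij hl]]] hk.
have hi : i = k.+1.
  case: (leqP k.+1 i) => hik; first lia.
  by move/negP: hn; case; apply: (loop_inl hl); lia.
subst i; case/qpP: hl => hij' hj e l.
have := l k.+2 ltac:(lia); rewrite /le2 (pointS (w:=w) (k:=k.+1)) /=; last lia.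
case: (nth N w k.+1) => /= /andP[u1 u2] //; lia.
Qed.

Lemma big_phi w : big_walk w -> big_walk (phi w).
Proof.
case/and4P => hst hea hhp hend; apply/and4P; split.
- apply/allP => i _; apply/allP => j _; apply/implyP; rewrite loop_phi => hl.
  have := allP hst i; rewrite mem_iota.
  case/qpP: (hl) => hij hj _ _.
  move=> /(_ ltac:(lia)) /allP /(_ j); rewrite mem_iota => /(_ ltac:(lia)) /implyP /(_ hl).
  rewrite nth_phi; last lia.
  by rewrite (loop_inl hl) //; lia.
- apply/allP => k; rewrite size_phi mem_iota => hk.
  have hk1 : k.+1 < size w by lia.
  have := allP hea k; rewrite mem_iota => /(_ ltac:(lia)).
  rewrite !nth_phi //; last lia.
  case h1: (inl w k); case h2: (inl w k.+1) => //.
  + have := last_step h1 (negbT h2) hk1.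
    by case: (nth N w k); case: (nth N w k.+1).
  + have := first_step (negbT h1) h2 hk1.
    by case: (nth N w k); case: (nth N w k.+1).
  + by case: (nth N w k); case: (nth N w k.+1).
- apply/allP => m; rewrite size_phi mem_iota => hm.
  have [a [ham haout hcase [r1 r2]]] := repr_pt (w:=w) (m:=m) ltac:(lia).
  have := allP hhp a; rewrite mem_iota => /(_ ltac:(lia)) ha.
  have [w1 w2] : ((point w a).1 <= (point w m).1 /\ (point w a).2 <= (point w m).2)%R.
    case: hcase => [->|[j' [hj' hl']]]; first by split.
    case/qpP: hl' => _ _ _ l'; have := l' m ltac:(lia); rewrite /le2 => /andP[]; done.
  rewrite r1 r2; lia.
- have [e1 e2] := endpoint_phi w; rewrite e1 e2; lia.
Qed.

Lemma left_right w : left_walk w -> right_walk (phi w).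
Proof.
case/andP => hb hx; apply/andP; split; first exact: big_phi.
case/and4P: hb => _ _ _ hend.
have [e1 e2] := endpoint_phi w; rewrite e1; lia.
Qed.

Lemma right_left w : right_walk w -> left_walk (phi w).
Proof.
case/andP => hb hx; apply/andP; split; first exact: big_phi.
case/and4P: hb => _ _ _ hend.
have [e1 e2] := endpoint_phi w; rewrite e1; lia.
Qed.

Lemma size_phiT n (t : n.-tuple step) : size (phi t) == n.
Proof. by rewrite size_phi size_tuple. Qed.
Definition phiT n (t : n.-tuple step) : n.-tuple step := Tuple (size_phiT t).
Lemma phiTK n : cancel (@phiT n) (@phiT n).
Proof. by move=> t; apply: val_inj => /=; rewrite phiK. Qed.

Theorem lemma2p1 (n : nat) :
  #|[set t : (2 * n).-tuple step | left_walk t]| =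
  #|[set t : (2 * n).-tuple step | right_walk t]|.
Proof.
have -> : [set t : (2 * n).-tuple step | left_walk t] =
          (@phiT _) @: [set t : (2 * n).-tuple step | right_walk t].
  apply/setP => t; rewrite inE; apply/idP/imsetP.
    move=> hl; exists (phiT t); last by rewrite phiTK.
    by rewrite inE; apply: left_right.
  by case=> u; rewrite inE => hu ->; apply: right_left.
by rewrite card_imset //; apply: can_inj (@phiTK _).
Qed.
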